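(* There exists a decreasing sequence of elements of $\mathcal{D}_0$ with limit $\sqrt3$.
   Context: For an infinite word $w$ (over any alphabet) with infinitely many palindromic prefixes (the empty word counting as one), let $(n_i)_{i\ge1}$ be the increasing sequence of their lengths and $\delta(w)=\limsup n_{i+1}/n_i$. $w$ has abundant palindromic prefixes if it has infinitely many palindromic prefixes and $n_{i+1}\le2n_i+1$ for all $i\ge1$. $\mathcal{D}_0$ is the set of values $\delta(w)$ over all words $w$ with abundant palindromic prefixes. *)

(* Defs.v *)
From Stdlib Require Import Reals Lra Lia.
From Coquelicot Require Import Coquelicot.
Open Scope R_scope.

Definition pal_prefix {A : Type} (w : nat -> A) (n : nat) : Prop :=
  forall i : nat, (i < n)%nat -> w i = w (n - 1 - i)%nat.

(* n enumerates, in increasing order, exactly the lengths of the palindromic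
   prefixes of w (0-indexed here: n 0 = 0 is the empty prefix).  Existence of
   such an n means w has infinitely many palindromic prefixes. *)
Definition pal_lengths {A : Type} (w : nat -> A) (n : nat -> nat) : Prop :=
  (forall i : nat, (n i < n (S i))%nat) /\
  (forall m : nat, pal_prefix w m <-> exists i : nat, n i = m).

Definition abundant_with {A : Type} (w : nat -> A) (n : nat -> nat) : Prop :=
  pal_lengths w n /\ (forall i : nat, (n (S i) <= 2 * n i + 1)%nat).

Definition delta_is {A : Type} (w : nat -> A) (n : nat -> nat) (d : Rbar) : Prop :=
  pal_lengths w n /\ is_LimSup_seq (fun i => INR (n (S i)) / INR (n i)) d.

Definition D0 (d : R) : Prop :=
  exists (A : Type) (w : nat -> A) (n : nat -> nat),
    abundant_with w n /\ delta_is w n (Finite d).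

(* Main.v *)
Require Import Defs.
From Stdlib Require Import Reals Lra Lia Arith.
From Coquelicot Require Import Coquelicot.
Open Scope R_scope.


Section Generic.
Local Open Scope nat_scope.
Variable n : nat -> nat.
Variable fresh : nat -> bool.
Variable ii : nat -> nat.
Hypothesis H0 : n 0 = 0%nat.
Hypothesis Hf : forall k, fresh k = true -> n (S k) = (2 * n k + 1)%nat.
Hypothesis Hs : forall k, fresh k = false -> (ii k < k)%nat /\ (n (S k) + n (ii k) = 2 * n k)%nat.

Lemma gen_mono : forall k j, (j < k)%nat -> (n j < n k)%nat.
Proof.
  induction k as [k IH] using lt_wf_ind.
  intros j Hj.
  destruct k as [|k]; [lia|].
  assert (Hk : (n k < n (S k))%nat).
  { destruct (fresh k) eqn:E.
    - rewrite (Hf k E); lia.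
    - destruct (Hs k E) as [Hi Hn].
      destruct k as [|k']; [lia|].
      assert (n (ii (S k')) < n (S k'))%nat by (apply IH; lia).
      lia. }
  destruct (Nat.eq_dec j k) as [->|Hne]; [exact Hk|].
  assert (n j < n k)%nat by (apply IH; lia). lia.
Qed.

Lemma gen_ge : forall k, (k <= n k)%nat.
Proof.
  induction k; [lia|]. pose proof (gen_mono (S k) k ltac:(lia)). lia.
Qed.

Lemma gen_abund : forall k, (n (S k) <= 2 * n k + 1)%nat.
Proof.
  intro k. destruct (fresh k) eqn:E.
  - rewrite (Hf k E); lia.
  - destruct (Hs k E); lia.
Qed.

Fixpoint idx (m : nat) : nat :=
  match m with
  | O => O
  | S m' => if (n (S (idx m')) <=? S m')%nat then S (idx m') else idx m'
  end.

Lemma idx_spec : forall m, (n (idx m) <= m < n (S (idx m)))%nat.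
Proof.
  induction m as [|m IH]; simpl.
  - rewrite H0. pose proof (gen_mono 1 0 ltac:(lia)). lia.
  - destruct (Nat.leb_spec (n (S (idx m))) (S m)).
    + pose proof (gen_mono (S (S (idx m))) (S (idx m)) ltac:(lia)). lia.
    + lia.
Qed.

Lemma idx_unique : forall m k, (n k <= m < n (S k))%nat -> idx m = k.
Proof.
  intros m k Hk. pose proof (idx_spec m) as Hi.
  destruct (lt_eq_lt_dec (idx m) k) as [[Hlt|Heq]|Hgt]; auto.
  - assert (n (S (idx m)) <= n k)%nat.
    { destruct (Nat.eq_dec (S (idx m)) k) as [<-|]; [lia|].
      pose proof (gen_mono k (S (idx m)) ltac:(lia)); lia. }
    lia.
  - assert (n (S k) <= n (idx m))%nat.
    { destruct (Nat.eq_dec (S k) (idx m)) as [<-|]; [lia|].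
      pose proof (gen_mono (idx m) (S k) ltac:(lia)); lia. }
    lia.
Qed.

Fixpoint wfu (fuel m : nat) : nat :=
  match fuel with
  | O => O
  | S f => let k := idx m in
           if andb (fresh k) (m =? n k)%nat then k else wfu f (n (S k) - 1 - m)
  end.

Definition w (m : nat) : nat := wfu (S m) m.

Lemma center_lt : forall m, let k := idx m in
  andb (fresh k) (m =? n k) = false -> (n (S k) - 1 - m < m)%nat.
Proof.
  intros m k Hc. pose proof (idx_spec m) as Hi. fold k in Hi.
  pose proof (gen_abund k).
  destruct (fresh k) eqn:E; simpl in Hc.
  - apply Nat.eqb_neq in Hc. rewrite (Hf k E) in *. lia.
  - destruct (Hs k E) as [Hik Hn].
    pose proof (gen_mono k (ii k) Hik). lia.
Qed.

Lemma wfu_stable : forall f m, (m < f)%nat -> wfu f m = w m.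
Proof.
  induction f as [f IH] using lt_wf_ind; intros m Hm.
  destruct f as [|f]; [lia|].
  unfold w. simpl.
  destruct (andb (fresh (idx m)) (m =? n (idx m))) eqn:E; [reflexivity|].
  pose proof (center_lt m E) as Hl.
  rewrite (IH f ltac:(lia)) by lia.
  destruct m as [|m']; [lia|].
  rewrite (IH (S m') ltac:(lia)) by lia. reflexivity.
Qed.

Lemma w_mirror : forall m k, (n k <= m < n (S k))%nat ->
  andb (fresh k) (m =? n k) = false -> w m = w (n (S k) - 1 - m).
Proof.
  intros m k Hk Hc.
  pose proof (idx_unique m k Hk) as Hi.
  assert (Hl := center_lt m). simpl in Hl. rewrite Hi in Hl.
  specialize (Hl Hc).
  unfold w at 1. simpl. rewrite Hi, Hc.
  apply wfu_stable. lia.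
Qed.

Lemma w_center : forall k, fresh k = true -> w (n k) = k.
Proof.
  intros k E.
  assert (Hk : (n k <= n k < n (S k))%nat) by (pose proof (gen_mono (S k) k ltac:(lia)); lia).
  pose proof (idx_unique (n k) k Hk) as Hi.
  unfold w. simpl. rewrite Hi, E, Nat.eqb_refl. reflexivity.
Qed.

Lemma pal_all : forall k, pal_prefix w (n k).
Proof.
  induction k as [k IH] using lt_wf_ind.
  destruct k as [|k].
  { intros t Ht. rewrite H0 in Ht. lia. }
  unfold pal_prefix. intros t Ht.
  set (N := n (S k)) in *.
  assert (Hmk : (n k < N)%nat) by (apply gen_mono; lia).
  assert (Hab : (N <= 2 * n k + 1)%nat) by apply gen_abund.
  assert (Hmir : forall t0, (n k <= t0 < N)%nat -> ~ (fresh k = true /\ t0 = n k) ->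
                 w t0 = w (N - 1 - t0)).
  { intros t0 Ht0 Hn. apply w_mirror; [exact Ht0|].
    destruct (fresh k) eqn:E; simpl; [|reflexivity].
    apply Nat.eqb_neq. intro. apply Hn; auto. }
  destruct (le_lt_dec (n k) t) as [Ht1|Ht1].
  - destruct (fresh k) eqn:E.
    + destruct (Nat.eq_dec t (n k)) as [->|Hne].
      * unfold N. rewrite (Hf k E). f_equal. lia.
      * apply Hmir; [lia|]. intros [_ ?]; contradiction.
    + apply Hmir; [lia|]. intros [? _]; discriminate.
  - destruct (le_lt_dec (n k) (N - 1 - t)) as [Ht2|Ht2].
    + symmetry. replace t with (N - 1 - (N - 1 - t))%nat at 2 by lia.
      apply Hmir; [lia|]. intros [E Heq].
      unfold N in Heq. rewrite (Hf k E) in Heq. lia.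
    + destruct (fresh k) eqn:E.
      { exfalso. unfold N in *. rewrite (Hf k E) in *. lia. }
      destruct (Hs k E) as [Hik Hn].
      pose proof (gen_mono k (ii k) Hik) as Hnik.
      assert (IHk := IH k ltac:(lia)). assert (IHi := IH (ii k) ltac:(lia)).
      unfold pal_prefix in IHk, IHi.
      rewrite (IHk t Ht1). rewrite (IHk (N - 1 - t) Ht2).
      rewrite (IHi (n k - 1 - t)) by (unfold N in *; lia).
      f_equal. unfold N in *. lia.
Qed.

Lemma w_letter : forall k, fresh k = false -> w (n k) = w (n (ii k)).
Proof.
  intros k E. destruct (Hs k E) as [Hik Hn].
  pose proof (gen_mono k (ii k) Hik) as Hnik.
  pose proof (gen_mono (S k) k ltac:(lia)).
  rewrite (w_mirror (n k) k) by (try lia; rewrite E; reflexivity).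
  rewrite (pal_all k) by lia. f_equal. lia.
Qed.

Lemma w_letter_le : forall k, (w (n k) <= k)%nat.
Proof.
  induction k as [k IH] using lt_wf_ind.
  destruct (fresh k) eqn:E.
  - rewrite w_center by exact E. lia.
  - rewrite w_letter by exact E. destruct (Hs k E). specialize (IH (ii k) H). lia.
Qed.

Lemma pal_period : forall M N, pal_prefix w M -> pal_prefix w N -> (M <= N <= 2 * M)%nat ->
  pal_prefix w (2 * M - N).
Proof.
  unfold pal_prefix. intros M N HM HN HMN t Ht.
  rewrite (HM t) by lia. rewrite (HN (M - 1 - t)) by lia.
  rewrite (HM (N - 1 - (M - 1 - t))) by lia. f_equal. lia.
Qed.

Hypothesis HV : forall k, fresh k = false -> forall j l,
  (ii k < j < k)%nat -> (ii k < l <= k)%nat -> w (n j) = w (n k) ->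
  (n l + 2 * n j <> 2 * n k + n (ii k))%nat.

Lemma mono_inv : forall a b, (n a < n b)%nat -> (a < b)%nat.
Proof.
  intros a b H. destruct (lt_dec a b); auto.
  destruct (Nat.eq_dec a b) as [->|]; [lia|].
  pose proof (gen_mono a b ltac:(lia)). lia.
Qed.

Lemma pal_only : forall m, pal_prefix w m -> exists k, n k = m.
Proof.
  induction m as [m IH] using lt_wf_ind. intros Hm.
  set (k := idx m). pose proof (idx_spec m) as Hk. fold k in Hk.
  destruct (Nat.eq_dec (n k) m) as [Heq|Hne]; [exists k; exact Heq|].
  exfalso.
  set (N := n (S k)) in *.
  pose proof (gen_abund k) as Hab. fold N in Hab.
  pose proof (pal_all k) as Pk. pose proof (pal_all (S k)) as PN. fold N in PN.
  set (j' := (2 * n k - m)%nat).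
  assert (Pj : pal_prefix w j').
  { unfold pal_prefix in *. intros a Ha. unfold j' in *.
    rewrite (Pk a) by lia. rewrite (Hm (n k - 1 - a)) by lia.
    rewrite (Pk (m - 1 - (n k - 1 - a))) by lia. f_equal. lia. }
  assert (Lj : w j' = w (n k)).
  { unfold pal_prefix in *. unfold j'.
    rewrite (Pk (2 * n k - m)) by lia. rewrite (Hm (n k - 1 - (2 * n k - m))) by lia.
    f_equal. lia. }
  destruct (IH j' ltac:(unfold j'; lia) Pj) as [j Hj].
  assert (Hjk : (j < k)%nat) by (apply mono_inv; unfold j' in Hj; lia).
  rewrite <- Hj in Lj.
  destruct (fresh k) eqn:E.
  - rewrite (w_center k E) in Lj. pose proof (w_letter_le j). lia.
  - destruct (Hs k E) as [Hik Hn]. fold N in Hn.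
    assert (Pp : pal_prefix w (2 * m - N)) by (apply pal_period; auto; lia).
    destruct (IH (2 * m - N)%nat ltac:(lia) Pp) as [l Hl].
    assert (Hl1 : (ii k < l)%nat) by (apply mono_inv; lia).
    assert (Hl2 : (l <= k)%nat).
    { assert (l < S k)%nat by (apply mono_inv; fold N; lia). lia. }
    assert (Hj1 : (ii k < j)%nat) by (apply mono_inv; unfold j' in Hj; lia).
    apply (HV k E j l ltac:(lia) ltac:(lia) Lj). unfold j' in Hj. lia.
Qed.

End Generic.


Section Family.
Local Open Scope nat_scope.
Variable m : nat.
Hypothesis Hm : 1 <= m.

Definition JJ (s : nat) : nat := s + 6.
Definition LL (s : nat) : nat := JJ s + 3 * m + 3.

Fixpoint Kp (s : nat) : nat := match s with 0 => 0 | S s' => Kp s' + LL s' end.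

Fixpoint pos (j : nat) : nat * nat :=
  match j with
  | 0 => (0, 0)
  | S j' => let (s, q) := pos j' in if S q <? LL s then (s, S q) else (S s, 0)
  end.

Definition loff (s q : nat) : nat :=
  if q <? JJ s then 2 else
  let q' := q - JJ s in
  if q' <? 3 * m then (match q' mod 3 with 0 => 1 | 1 => 3 | _ => 2 end)
  else if q' =? 3 * m then 1 else 3.

Definition off (k : nat) : nat := let (s, q) := pos (k - 2) in loff s q.

Definition step (k : nat) (x : nat * nat * nat * nat) : nat :=
  let '(a, b, c, d) := x in
  if k <? 2 then 2 * d + 1 else
  match off k with 1 => 2 * d - c | 2 => 2 * d - b | _ => 2 * d - a end.

Fixpoint quad (k : nat) : nat * nat * nat * nat :=
  match k with
  | 0 => (0, 0, 0, 0)
  | S k' => let '(a, b, c, d) := quad k' in (b, c, d, step k' (a, b, c, d))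
  end.

Definition nn (k : nat) : nat := let '(_, _, _, d) := quad k in d.

Lemma quad_eq : forall k, quad k = (nn (k - 3), nn (k - 2), nn (k - 1), nn k).
Proof.
  induction k as [|k IH]; [reflexivity|].
  assert (E : quad (S k) = (nn (k - 2), nn (k - 1), nn k,
     step k (nn (k - 3), nn (k - 2), nn (k - 1), nn k))) by (simpl; rewrite IH; reflexivity).
  assert (E2 : nn (S k) = step k (nn (k - 3), nn (k - 2), nn (k - 1), nn k))
    by (unfold nn at 1; rewrite E; reflexivity).
  rewrite E, E2.
  replace (S k - 3) with (k - 2) by lia.
  replace (S k - 2) with (k - 1) by lia.
  replace (S k - 1) with k by lia. reflexivity.
Qed.

Lemma loff_range : forall s q, 1 <= loff s q <= 3.
Proof.
  intros s q. unfold loff.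
  destruct (q <? JJ s); [lia|].
  destruct (q - JJ s <? 3 * m); [|destruct (q - JJ s =? 3 * m); lia].
  destruct ((q - JJ s) mod 3) as [|[|]]; lia.
Qed.

Lemma off_range : forall k, 1 <= off k <= 3.
Proof. intro k. unfold off. destruct (pos (k - 2)). apply loff_range. Qed.

Lemma off_2 : off 2 = 2.
Proof. unfold off, loff. simpl. reflexivity. Qed.

Lemma nn_succ : forall k, nn (S k) = if k <? 2 then 2 * nn k + 1 else 2 * nn k - nn (k - off k).
Proof.
  intro k. unfold nn at 1. simpl quad. rewrite quad_eq. simpl.
  destruct (k <? 2); [reflexivity|].
  pose proof (off_range k).
  destruct (off k) as [|[|[|[|]]]]; try lia; reflexivity.
Qed.

Lemma off_le : forall k, 2 <= k -> off k <= k.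
Proof.
  intros k Hk. destruct (Nat.eq_dec k 2) as [->|]; [rewrite off_2; lia|].
  pose proof (off_range k); lia.
Qed.

Lemma nn_mono : forall k j, j < k -> nn j < nn k.
Proof.
  induction k as [k IH] using lt_wf_ind.
  intros j Hj. destruct k as [|k]; [lia|].
  assert (Hk : nn k < nn (S k)).
  { rewrite nn_succ. destruct (Nat.ltb_spec k 2); [lia|].
    pose proof (off_range k). pose proof (off_le k H).
    assert (nn (k - off k) < nn k) by (apply IH; lia). lia. }
  destruct (Nat.eq_dec j k) as [->|Hne]; [exact Hk|].
  assert (nn j < nn k) by (apply IH; lia). lia.
Qed.

Definition fr (k : nat) : bool := k <? 2.
Definition ii (k : nat) : nat := k - off k.

Lemma nn_0 : nn 0 = 0. Proof. reflexivity. Qed.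
Lemma nn_f : forall k, fr k = true -> nn (S k) = 2 * nn k + 1.
Proof. intros k E. rewrite nn_succ. unfold fr in E. rewrite E. reflexivity. Qed.
Lemma nn_s : forall k, fr k = false -> ii k < k /\ nn (S k) + nn (ii k) = 2 * nn k.
Proof.
  intros k E. unfold fr in E. apply Nat.ltb_ge in E.
  pose proof (off_range k). pose proof (off_le k E).
  assert (nn (k - off k) < nn k) by (apply nn_mono; lia).
  split; unfold ii; [lia|]. rewrite nn_succ.
  destruct (Nat.ltb_spec k 2); lia.
Qed.


Lemma m3 : forall t r, r < 3 -> (3 * t + r) mod 3 = r.
Proof.
  intros t r Hr. rewrite Nat.add_comm, Nat.mul_comm. rewrite Nat.Div0.mod_add.
  apply Nat.mod_small; exact Hr.
Qed.

Lemma loff_fib : forall s q, q < JJ s -> loff s q = 2.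
Proof. intros s q H. unfold loff. apply Nat.ltb_lt in H. rewrite H. reflexivity. Qed.

Lemma loff_per : forall s t r, t < m -> r < 3 ->
  loff s (JJ s + (3 * t + r)) = match r with 0 => 1 | 1 => 3 | _ => 2 end.
Proof.
  intros s t r Ht Hr. unfold loff.
  destruct (Nat.ltb_spec (JJ s + (3 * t + r)) (JJ s)); [lia|].
  replace (JJ s + (3 * t + r) - JJ s) with (3 * t + r) by lia.
  destruct (Nat.ltb_spec (3 * t + r) (3 * m)); [|lia].
  rewrite m3 by exact Hr. reflexivity.
Qed.

Lemma loff_p1 : forall s t, t < m -> loff s (JJ s + 3 * t) = 1.
Proof. intros. pose proof (loff_per s t 0 H ltac:(lia)). rewrite Nat.add_0_r in H0. exact H0. Qed.
Lemma loff_p3 : forall s t, t < m -> loff s (JJ s + 3 * t + 1) = 3.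
Proof. intros. rewrite <- Nat.add_assoc. apply (loff_per s t 1 H ltac:(lia)). Qed.
Lemma loff_p2 : forall s t, t < m -> loff s (JJ s + 3 * t + 2) = 2.
Proof. intros. rewrite <- Nat.add_assoc. apply (loff_per s t 2 H ltac:(lia)). Qed.

Lemma loff_tail : forall s r, r < 3 ->
  loff s (JJ s + 3 * m + r) = match r with 0 => 1 | _ => 3 end.
Proof.
  intros s r Hr. unfold loff.
  destruct (Nat.ltb_spec (JJ s + 3 * m + r) (JJ s)); [lia|].
  replace (JJ s + 3 * m + r - JJ s) with (3 * m + r) by lia.
  destruct (Nat.ltb_spec (3 * m + r) (3 * m)); [lia|].
  destruct r as [|[|[|]]]; try lia.
  - rewrite Nat.add_0_r, Nat.eqb_refl. reflexivity.
  - destruct (Nat.eqb_spec (3 * m + 1) (3 * m)); [lia|reflexivity].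
  - destruct (Nat.eqb_spec (3 * m + 2) (3 * m)); [lia|reflexivity].
Qed.

Lemma loff_d1 : forall s, loff s (JJ s + 3 * m) = 1.
Proof. intro s. pose proof (loff_tail s 0 ltac:(lia)). rewrite Nat.add_0_r in H. exact H. Qed.
Lemma loff_d2 : forall s, loff s (JJ s + 3 * m + 1) = 3.
Proof. intro s. apply (loff_tail s 1 ltac:(lia)). Qed.
Lemma loff_d3 : forall s, loff s (JJ s + 3 * m + 2) = 3.
Proof. intro s. apply (loff_tail s 2 ltac:(lia)). Qed.

Lemma loff_cases : forall s q, q < LL s ->
  q < JJ s \/ (exists t, t < m /\ (q = JJ s + 3 * t \/ q = JJ s + 3 * t + 1 \/ q = JJ s + 3 * t + 2))
  \/ q = JJ s + 3 * m \/ q = JJ s + 3 * m + 1 \/ q = JJ s + 3 * m + 2.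
Proof.
  intros s q Hq. unfold LL in Hq.
  destruct (Nat.ltb_spec q (JJ s)); [left; exact H|right].
  destruct (Nat.ltb_spec (q - JJ s) (3 * m)).
  - left. exists ((q - JJ s) / 3). split.
    + apply Nat.Div0.div_lt_upper_bound. lia.
    + pose proof (Nat.div_mod (q - JJ s) 3 ltac:(lia)).
      pose proof (Nat.mod_upper_bound (q - JJ s) 3 ltac:(lia)). lia.
  - right. lia.
Qed.

Lemma Kp_S : forall s, Kp (S s) = Kp s + LL s.
Proof. reflexivity. Qed.

Lemma pos_S : forall j, pos (S j) = let (s, q) := pos j in if S q <? LL s then (s, S q) else (S s, 0).
Proof. reflexivity. Qed.

Lemma pos_Kp : forall s q, q < LL s -> pos (Kp s + q) = (s, q).
Proof.
  induction s as [|s IHs]; intro q; induction q as [|q IHq]; intro Hq.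
  - reflexivity.
  - replace (Kp 0 + S q) with (S (Kp 0 + q)) by lia. rewrite pos_S, IHq by lia.
    destruct (Nat.ltb_spec (S q) (LL 0)); [reflexivity|lia].
  - rewrite Kp_S, Nat.add_0_r.
    assert (E : Kp s + LL s = S (Kp s + (LL s - 1))) by (unfold LL; lia).
    rewrite E, pos_S, IHs by (unfold LL; lia).
    destruct (Nat.ltb_spec (S (LL s - 1)) (LL s)); [unfold LL in *; lia|reflexivity].
  - replace (Kp (S s) + S q) with (S (Kp (S s) + q)) by lia. rewrite pos_S, IHq by lia.
    destruct (Nat.ltb_spec (S q) (LL (S s))); [reflexivity|lia].
Qed.

Lemma pos_spec : forall j, snd (pos j) < LL (fst (pos j)) /\ j = Kp (fst (pos j)) + snd (pos j).
Proof.
  induction j as [|j [IH1 IH2]]; [simpl; unfold LL; lia|].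
  simpl. destruct (pos j) as [s q]. simpl in *.
  destruct (Nat.ltb_spec (S q) (LL s)); simpl; [lia|].
  assert (q = LL s - 1) by lia. unfold LL in *. lia.
Qed.

Lemma decomp : forall k, 2 <= k -> exists s q, q < LL s /\ k = 2 + Kp s + q.
Proof.
  intros k Hk. destruct (pos_spec (k - 2)) as [H1 H2].
  exists (fst (pos (k - 2))), (snd (pos (k - 2))). split; [exact H1|lia].
Qed.

Lemma off_at : forall s q, q < LL s -> off (2 + Kp s + q) = loff s q.
Proof.
  intros s q Hq. unfold off. replace (2 + Kp s + q - 2) with (Kp s + q) by lia.
  rewrite pos_Kp by exact Hq. reflexivity.
Qed.


Lemma Kp_ge : forall s, s <= Kp s.
Proof. induction s; simpl; unfold LL; lia. Qed.

Lemma Kp_mono : forall s s', s <= s' -> Kp s <= Kp s'.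
Proof. intros s s' H. induction H; simpl; lia. Qed.

Definition ww := w nn fr.


Lemma k_prev : forall s q, 1 <= q -> q < LL s -> 2 + Kp s + q - 1 = 2 + Kp s + (q - 1).
Proof. intros; lia. Qed.

Ltac offq s q := rewrite (off_at s q) by (unfold LL, JJ in *; lia).

Lemma pat2 : forall k, 3 <= k -> off k = 2 -> off (k - 1) <> 1.
Proof.
  intros k Hk Ho. destruct (decomp k ltac:(lia)) as [s [q [Hq ->]]].
  rewrite off_at in Ho by exact Hq.
  destruct (loff_cases s q Hq) as [Hf|[[t [Ht [E|[E|E]]]]|[E|[E|E]]]].
  - destruct q as [|q].
    + destruct s as [|s]; [simpl in Hk; lia|].
      rewrite Kp_S. replace (2 + (Kp s + LL s) + 0 - 1) with (2 + Kp s + (JJ s + 3 * m + 2)) by (unfold LL; lia).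
      offq s (JJ s + 3 * m + 2). rewrite loff_d3; lia.
    + replace (2 + Kp s + S q - 1) with (2 + Kp s + q) by lia.
      offq s q. rewrite loff_fib by lia. lia.
  - subst q. rewrite loff_p1 in Ho by lia. lia.
  - subst q. rewrite loff_p3 in Ho by lia. lia.
  - subst q. replace (2 + Kp s + (JJ s + 3 * t + 2) - 1) with (2 + Kp s + (JJ s + 3 * t + 1)) by lia.
    offq s (JJ s + 3 * t + 1). rewrite loff_p3 by lia. lia.
  - subst q. rewrite loff_d1 in Ho. lia.
  - subst q. rewrite loff_d2 in Ho. lia.
  - subst q. rewrite loff_d3 in Ho. lia.
Qed.

Lemma pat3 : forall k, 2 <= k -> off k = 3 -> 6 <= k /\
  ((off (k - 1) = 1 /\ off (k - 2) <> 1) \/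
   (off (k - 1) = 3 /\ off (k - 2) = 1 /\ off (k - 3) = 2)).
Proof.
  intros k Hk Ho. destruct (decomp k ltac:(lia)) as [s [q [Hq ->]]].
  rewrite off_at in Ho by exact Hq.
  destruct (loff_cases s q Hq) as [Hf|[[t [Ht [E|[E|E]]]]|[E|[E|E]]]].
  - rewrite loff_fib in Ho by lia. lia.
  - subst q. rewrite loff_p1 in Ho by lia. lia.
  - subst q. split; [unfold JJ; lia|]. left. split.
    + replace (2 + Kp s + (JJ s + 3 * t + 1) - 1) with (2 + Kp s + (JJ s + 3 * t)) by lia.
      offq s (JJ s + 3 * t). rewrite loff_p1 by lia. reflexivity.
    + destruct t as [|t].
      * replace (2 + Kp s + (JJ s + 3 * 0 + 1) - 2) with (2 + Kp s + (JJ s - 1)) by (unfold JJ; lia).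
        offq s (JJ s - 1). rewrite loff_fib by (unfold JJ; lia). lia.
      * replace (2 + Kp s + (JJ s + 3 * S t + 1) - 2) with (2 + Kp s + (JJ s + 3 * t + 2)) by lia.
        offq s (JJ s + 3 * t + 2). rewrite loff_p2 by lia. lia.
  - subst q. rewrite loff_p2 in Ho by lia. lia.
  - subst q. rewrite loff_d1 in Ho. lia.
  - subst q. split; [unfold JJ; lia|]. left. split.
    + replace (2 + Kp s + (JJ s + 3 * m + 1) - 1) with (2 + Kp s + (JJ s + 3 * m)) by lia.
      offq s (JJ s + 3 * m). rewrite loff_d1. reflexivity.
    + replace (2 + Kp s + (JJ s + 3 * m + 1) - 2) with (2 + Kp s + (JJ s + 3 * (m - 1) + 2)) by lia.
      offq s (JJ s + 3 * (m - 1) + 2). rewrite loff_p2 by lia. lia.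
  - subst q. split; [unfold JJ; lia|]. right. split; [|split].
    + replace (2 + Kp s + (JJ s + 3 * m + 2) - 1) with (2 + Kp s + (JJ s + 3 * m + 1)) by lia.
      offq s (JJ s + 3 * m + 1). rewrite loff_d2. reflexivity.
    + replace (2 + Kp s + (JJ s + 3 * m + 2) - 2) with (2 + Kp s + (JJ s + 3 * m)) by lia.
      offq s (JJ s + 3 * m). rewrite loff_d1. reflexivity.
    + replace (2 + Kp s + (JJ s + 3 * m + 2) - 3) with (2 + Kp s + (JJ s + 3 * (m - 1) + 2)) by lia.
      offq s (JJ s + 3 * (m - 1) + 2). rewrite loff_p2 by lia. reflexivity.
Qed.

Definition Lt (k : nat) : nat := ww (nn k).

Lemma Lt_rel : forall k, 2 <= k -> Lt k = Lt (k - off k).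
Proof.
  intros k Hk. unfold Lt, ww.
  assert (E : fr k = false) by (unfold fr; apply Nat.ltb_ge; exact Hk).
  pose proof (w_letter (nn) fr (ii) (nn_0) (nn_f) (nn_s) k E) as H.
  unfold ii in H. exact H.
Qed.

Lemma Lt_01 : Lt 1 <> Lt 0.
Proof.
  unfold Lt, ww.
  rewrite (w_center (nn) fr (ii) (nn_0) (nn_f) (nn_s) 1 eq_refl).
  rewrite (w_center (nn) fr (ii) (nn_0) (nn_f) (nn_s) 0 eq_refl). lia.
Qed.

Lemma Epat : forall k, 1 <= k -> (Lt k = Lt (k - 1) <-> (2 <= k /\ off k = 1)).
Proof.
  induction k as [k IH] using lt_wf_ind. intros Hk.
  destruct (Nat.eq_dec k 1) as [->|Hk1].
  { split; [intro H; exfalso; apply Lt_01; exact H|lia]. }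
  pose proof (off_range k) as Hr.
  rewrite (Lt_rel k) by lia.
  destruct (off k) as [|[|[|[|]]]] eqn:Ho; try lia.
  - split; [|lia]. intro H. exfalso.
    destruct (Nat.eq_dec k 2) as [->|Hk2].
    + apply Lt_01. simpl in H. symmetry; exact H.
    + pose proof (pat2 k ltac:(lia) Ho) as P.
      destruct (IH (k - 1) ltac:(lia) ltac:(lia)) as [I1 _].
      replace (k - 1 - 1) with (k - 2) in I1 by lia.
      apply P. apply I1. symmetry. exact H.
  - split; [|lia]. intro H. exfalso.
    destruct (pat3 k ltac:(lia) Ho) as [Hk6 [[P1 P2]|[P1 [P2 P3]]]].
    + destruct (IH (k - 1) ltac:(lia) ltac:(lia)) as [_ I1].
      destruct (IH (k - 2) ltac:(lia) ltac:(lia)) as [I2 _].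
      replace (k - 1 - 1) with (k - 2) in I1 by lia.
      replace (k - 2 - 1) with (k - 3) in I2 by lia.
      specialize (I1 (conj ltac:(lia) P1)).
      apply P2. apply I2. rewrite <- I1. symmetry. exact H.
    + destruct (IH (k - 3) ltac:(lia) ltac:(lia)) as [I3 _].
      replace (k - 3 - 1) with (k - 4) in I3 by lia.
      pose proof (Lt_rel (k - 1) ltac:(lia)) as R1. rewrite P1 in R1.
      replace (k - 1 - 3) with (k - 4) in R1 by lia.
      assert (Lt (k - 3) = Lt (k - 4)) by (rewrite H, R1; reflexivity).
      specialize (I3 H0). lia.
Qed.

Lemma HV_fam : forall k, fr k = false -> forall j l,
  ii k < j < k -> ii k < l <= k -> ww (nn j) = ww (nn k) ->
  nn l + 2 * nn j <> 2 * nn k + nn (ii k).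
Proof.
  intros k E j l Hj Hl Hw. fold (Lt j) in Hw. fold (Lt k) in Hw.
  unfold fr in E. apply Nat.ltb_ge in E. unfold ii in *.
  pose proof (off_range k) as Hr.
  assert (Ek : Lt k <> Lt (k - 1)).
  { intro H. apply (Epat k ltac:(lia)) in H. destruct H as [_ H].
    destruct (off k) as [|[|[|]]] eqn:Ho; try lia. }
  destruct (off k) as [|[|[|[|]]]] eqn:Ho; try lia.
  - assert (j = k - 1) by lia. subst j. exfalso; apply Ek; symmetry; exact Hw.
  - destruct (pat3 k ltac:(lia) Ho) as [Hk6 [[P1 P2]|[P1 [P2 P3]]]].
    + exfalso. destruct (Nat.eq_dec j (k - 1)) as [->|].
      * apply Ek; symmetry; exact Hw.
      * assert (j = k - 2) by lia. subst j.
        destruct (Epat (k - 1) ltac:(lia)) as [_ I1].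
        replace (k - 1 - 1) with (k - 2) in I1 by lia.
        specialize (I1 (conj ltac:(lia) P1)). apply Ek. rewrite <- Hw, I1. reflexivity.
    + destruct (Nat.eq_dec j (k - 1)) as [->|].
      * exfalso; apply Ek; symmetry; exact Hw.
      * assert (j = k - 2) by lia. subst j.
        pose proof (nn_s (k - 1)) as S1. unfold fr, ii in S1.
        destruct S1 as [_ S1]; [apply Nat.ltb_ge; lia|].
        rewrite P1 in S1. replace (S (k - 1)) with k in S1 by lia.
        pose proof (nn_s (k - 2)) as S2. unfold fr, ii in S2.
        destruct S2 as [_ S2]; [apply Nat.ltb_ge; lia|].
        rewrite P2 in S2. replace (S (k - 2)) with (k - 1) in S2 by lia.
        replace (k - 1 - 3) with (k - 4) in S1 by lia.
        replace (k - 2 - 1) with (k - 3) in S2 by lia.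
        assert (nn (k - 4) < nn (k - 3)) by (apply nn_mono; lia).
        assert (nn (k - 3) < nn (k - 2)) by (apply nn_mono; lia).
        assert (nn l <= nn k).
        { destruct (Nat.eq_dec l k) as [->|]; [lia|]. pose proof (nn_mono k l ltac:(lia)); lia. }
        lia.
Qed.

Theorem fam_abundant : abundant_with (ww) (nn).
Proof.
  split; [split|].
  - intro i. apply nn_mono. lia.
  - intro M. split.
    + apply (pal_only (nn) fr (ii) (nn_0) (nn_f) (nn_s) (HV_fam)).
    + intros [i <-]. apply (pal_all (nn) fr (ii) (nn_0) (nn_f) (nn_s)).
  - intro i. apply (gen_abund nn fr ii nn_0 nn_f nn_s).
Qed.

End Family.


Section Analysis.
Variable m : nat.
Hypothesis Hm : (1 <= m)%nat.

Definition rho (k : nat) : R := INR (nn m (S k)) / INR (nn m k).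

Lemma nn_pos : forall k, (1 <= k)%nat -> 0 < INR (nn m k).
Proof.
  intros k Hk. apply lt_0_INR. pose proof (nn_mono m Hm k 0 ltac:(lia)). lia.
Qed.

Lemma rho_pos : forall k, (1 <= k)%nat -> 0 < rho k.
Proof.
  intros k Hk. unfold rho. apply Rdiv_lt_0_compat; apply nn_pos; lia.
Qed.

Lemma rho_rec_gen : forall k, (2 <= k)%nat ->
  rho k = 2 - INR (nn m (k - off m k)) / INR (nn m k).
Proof.
  intros k Hk. unfold rho.
  pose proof (nn_s m Hm k) as H. unfold fr, ii in H.
  destruct H as [_ H]; [apply Nat.ltb_ge; exact Hk|].
  apply (f_equal INR) in H. rewrite plus_INR, mult_INR in H. simpl in H.
  pose proof (nn_pos k ltac:(lia)).
  apply (Rmult_eq_reg_r (INR (nn m k))); [|lra].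
  unfold Rdiv. rewrite Rmult_minus_distr_r, !Rmult_assoc, Rinv_l by lra. lra.
Qed.

Lemma rho_rec1 : forall k, (4 <= k)%nat -> off m k = 1%nat -> rho k = 2 - / rho (k - 1).
Proof.
  intros k Hk Ho. rewrite rho_rec_gen by lia. rewrite Ho. unfold rho.
  replace (S (k - 1)) with k by lia.
  pose proof (nn_pos k ltac:(lia)). pose proof (nn_pos (k - 1) ltac:(lia)).
  field. split; lra.
Qed.

Lemma rho_rec2 : forall k, (4 <= k)%nat -> off m k = 2%nat ->
  rho k = 2 - / (rho (k - 1) * rho (k - 2)).
Proof.
  intros k Hk Ho. rewrite rho_rec_gen by lia. rewrite Ho. unfold rho.
  replace (S (k - 1)) with k by lia. replace (S (k - 2)) with (k - 1)%nat by lia.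
  pose proof (nn_pos k ltac:(lia)). pose proof (nn_pos (k - 1) ltac:(lia)).
  pose proof (nn_pos (k - 2) ltac:(lia)).
  field. repeat split; lra.
Qed.

Lemma rho_rec3 : forall k, (4 <= k)%nat -> off m k = 3%nat ->
  rho k = 2 - / (rho (k - 1) * rho (k - 2) * rho (k - 3)).
Proof.
  intros k Hk Ho. rewrite rho_rec_gen by lia. rewrite Ho. unfold rho.
  replace (S (k - 1)) with k by lia. replace (S (k - 2)) with (k - 1)%nat by lia.
  replace (S (k - 3)) with (k - 2)%nat by lia.
  pose proof (nn_pos k ltac:(lia)). pose proof (nn_pos (k - 1) ltac:(lia)).
  pose proof (nn_pos (k - 2) ltac:(lia)). pose proof (nn_pos (k - 3) ltac:(lia)).
  field. repeat split; lra.
Qed.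


Definition inI (a b x : R) : Prop := a <= x <= b.

Lemma prod2_bounds : forall a1 b1 a2 b2 x y, 0 < a1 -> 0 < a2 ->
  inI a1 b1 x -> inI a2 b2 y -> a1 * a2 <= x * y <= b1 * b2.
Proof.
  unfold inI. intros a1 b1 a2 b2 x y H1 H2 [Hx1 Hx2] [Hy1 Hy2].
  split; apply Rmult_le_compat; lra.
Qed.

Lemma F_bounds : forall a b p, 0 < a -> a <= p <= b -> 2 - / a <= 2 - / p <= 2 - / b.
Proof.
  intros a b p Ha [H1 H2].
  assert (/ p <= / a) by (apply Rinv_le_contravar; lra).
  assert (/ b <= / p) by (apply Rinv_le_contravar; lra).
  lra.
Qed.

Lemma box1 : forall a b x lo hi, 0 < a -> inI a b x -> lo <= 2 - / a -> 2 - / b <= hi ->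
  inI lo hi (2 - / x).
Proof.
  intros a b x lo hi Ha Hx H1 H2. pose proof (F_bounds a b x Ha Hx). unfold inI; lra.
Qed.

Lemma box2 : forall a1 b1 a2 b2 x y lo hi, 0 < a1 -> 0 < a2 -> inI a1 b1 x -> inI a2 b2 y ->
  lo <= 2 - / (a1 * a2) -> 2 - / (b1 * b2) <= hi -> inI lo hi (2 - / (x * y)).
Proof.
  intros a1 b1 a2 b2 x y lo hi H1 H2 Hx Hy Hl Hh.
  pose proof (prod2_bounds a1 b1 a2 b2 x y H1 H2 Hx Hy) as P.
  pose proof (F_bounds (a1 * a2) (b1 * b2) (x * y) ltac:(apply Rmult_lt_0_compat; lra) P).
  unfold inI; lra.
Qed.

Lemma box3 : forall a1 b1 a2 b2 a3 b3 x y z lo hi, 0 < a1 -> 0 < a2 -> 0 < a3 ->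
  inI a1 b1 x -> inI a2 b2 y -> inI a3 b3 z ->
  lo <= 2 - / (a1 * a2 * a3) -> 2 - / (b1 * b2 * b3) <= hi -> inI lo hi (2 - / (x * y * z)).
Proof.
  intros a1 b1 a2 b2 a3 b3 x y z lo hi H1 H2 H3 Hx Hy Hz Hl Hh.
  pose proof (prod2_bounds a1 b1 a2 b2 x y H1 H2 Hx Hy) as P.
  assert (P' : inI (a1 * a2) (b1 * b2) (x * y)) by exact P.
  apply (box2 (a1 * a2) (b1 * b2) a3 b3 (x * y) z lo hi); auto.
  apply Rmult_lt_0_compat; lra.
Qed.

Definition inF := inI (3/2) (17/10).
Definition inA := inI (4/3) (24/17).
Definition inB := inI (5/3) (177/100).
Definition inC := inI (77/50) (81/50).
Definition inE := inI (3/2) (177/100).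

Lemma F_E : forall x, inF x -> inE x. Proof. unfold inF, inE, inI; intros; lra. Qed.
Lemma B_E : forall x, inB x -> inE x. Proof. unfold inB, inE, inI; intros; lra. Qed.
Lemma C_F : forall x, inC x -> inF x. Proof. unfold inC, inF, inI; intros; lra. Qed.

Lemma st_F1 : forall x, inF x -> inA (2 - / x).
Proof. intros. apply (box1 (3/2) (17/10)); auto; lra. Qed.
Lemma st_F3 : forall x y z, inA x -> inF y -> inE z -> inB (2 - / (x * y * z)).
Proof. intros. apply (box3 (4/3) (24/17) (3/2) (17/10) (3/2) (177/100)); auto; lra. Qed.
Lemma st_F2 : forall x y, inB x -> inA y -> inC (2 - / (x * y)).
Proof. intros. apply (box2 (5/3) (177/100) (4/3) (24/17)); auto; lra. Qed.
Lemma st_def : forall x y z, inB x -> inA y -> inF z -> inB (2 - / (x * y * z)).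
Proof. intros. apply (box3 (5/3) (177/100) (4/3) (24/17) (3/2) (17/10)); auto; lra. Qed.
Lemma st_fib1 : forall x y, inB x -> inB y -> inF (2 - / (x * y)).
Proof. intros. apply (box2 (5/3) (177/100) (5/3) (177/100)); auto; lra. Qed.
Lemma st_fib2 : forall x y, inF x -> inB y -> inF (2 - / (x * y)).
Proof. intros. apply (box2 (3/2) (17/10) (5/3) (177/100)); auto; lra. Qed.
Lemma st_fib : forall x y, inF x -> inF y -> inF (2 - / (x * y)).
Proof. intros. apply (box2 (3/2) (17/10) (3/2) (17/10)); auto; lra. Qed.

Ltac req := repeat first [ reflexivity | match goal with |- rho _ = rho _ => apply f_equal; lia end | f_equal ].

Definition Ast (s : nat) : nat := (2 + Kp m s + JJ s)%nat.

Lemma off_win : forall s q', (q' < 3 * m + 3)%nat -> off m (Ast s + q') = loff m s (JJ s + q').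
Proof.
  intros s q' Hq. unfold Ast. replace (2 + Kp m s + JJ s + q')%nat with (2 + Kp m s + (JJ s + q'))%nat by lia.
  apply off_at; auto. unfold LL. lia.
Qed.

Lemma Ast_ge : forall s, (8 + s <= Ast s)%nat.
Proof. intro s. unfold Ast, JJ. pose proof (Kp_ge m Hm s). lia. Qed.

Lemma window_box : forall s, inF (rho (Ast s - 1)) -> inF (rho (Ast s - 2)) ->
  (forall t, (t <= m)%nat -> inF (rho (Ast s + 3 * t - 1)) /\ inE (rho (Ast s + 3 * t - 2))) /\
  inA (rho (Ast s + 3 * m)) /\ inB (rho (Ast s + 3 * m + 1)) /\ inB (rho (Ast s + 3 * m + 2)) /\
  inF (rho (Ast s + 3 * m + 3)) /\ inF (rho (Ast s + 3 * m + 4)).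
Proof.
  intros s H1 H2. pose proof (Ast_ge s) as HA.
  assert (Per : forall t, (t <= m)%nat -> inF (rho (Ast s + 3 * t - 1)) /\ inE (rho (Ast s + 3 * t - 2))).
  { induction t as [|t IH]; intro Ht.
    - rewrite Nat.mul_0_r, Nat.add_0_r. split; [exact H1|apply F_E; exact H2].
    - destruct (IH ltac:(lia)) as [I1 I2].
      assert (R0 : rho (Ast s + 3 * t) = 2 - / rho (Ast s + 3 * t - 1)).
      { apply rho_rec1; [lia|]. rewrite off_win by lia. apply loff_p1; auto; lia. }
      assert (A0 : inA (rho (Ast s + 3 * t))) by (rewrite R0; apply st_F1; exact I1).
      assert (R1 : rho (Ast s + 3 * t + 1) = 2 - / (rho (Ast s + 3 * t) * rho (Ast s + 3 * t - 1) * rho (Ast s + 3 * t - 2))).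
      { rewrite rho_rec3; [|lia|].
        - req.
        - try rewrite <- !Nat.add_assoc. rewrite off_win by lia. replace (JJ s + (3 * t + 1))%nat with (JJ s + 3 * t + 1)%nat by lia.
          apply loff_p3; auto; lia. }
      assert (B0 : inB (rho (Ast s + 3 * t + 1))) by (rewrite R1; apply st_F3; auto).
      assert (R2 : rho (Ast s + 3 * t + 2) = 2 - / (rho (Ast s + 3 * t + 1) * rho (Ast s + 3 * t))).
      { rewrite rho_rec2; [|lia|].
        - req.
        - try rewrite <- !Nat.add_assoc. rewrite off_win by lia. replace (JJ s + (3 * t + 2))%nat with (JJ s + 3 * t + 2)%nat by lia.
          apply loff_p2; auto; lia. }
      assert (C0 : inC (rho (Ast s + 3 * t + 2))) by (rewrite R2; apply st_F2; auto).
      replace (Ast s + 3 * S t - 1)%nat with (Ast s + 3 * t + 2)%nat by lia.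
      replace (Ast s + 3 * S t - 2)%nat with (Ast s + 3 * t + 1)%nat by lia.
      split; [apply C_F; exact C0|apply B_E; exact B0]. }
  split; [exact Per|].
  destruct (Per m (le_n m)) as [I1 I2].
  assert (R0 : rho (Ast s + 3 * m) = 2 - / rho (Ast s + 3 * m - 1)).
  { apply rho_rec1; [lia|]. rewrite off_win by lia. apply loff_d1; auto. }
  assert (A0 : inA (rho (Ast s + 3 * m))) by (rewrite R0; apply st_F1; exact I1).
  assert (R1 : rho (Ast s + 3 * m + 1) = 2 - / (rho (Ast s + 3 * m) * rho (Ast s + 3 * m - 1) * rho (Ast s + 3 * m - 2))).
  { rewrite rho_rec3; [|lia|].
    - req.
    - try rewrite <- !Nat.add_assoc. rewrite off_win by lia. replace (JJ s + (3 * m + 1))%nat with (JJ s + 3 * m + 1)%nat by lia.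
      apply loff_d2; auto. }
  assert (B0 : inB (rho (Ast s + 3 * m + 1))) by (rewrite R1; apply st_F3; auto).
  assert (R2 : rho (Ast s + 3 * m + 2) = 2 - / (rho (Ast s + 3 * m + 1) * rho (Ast s + 3 * m) * rho (Ast s + 3 * m - 1))).
  { rewrite rho_rec3; [|lia|].
    - req.
    - try rewrite <- !Nat.add_assoc. rewrite off_win by lia. replace (JJ s + (3 * m + 2))%nat with (JJ s + 3 * m + 2)%nat by lia.
      apply loff_d3; auto. }
  assert (B1 : inB (rho (Ast s + 3 * m + 2))) by (rewrite R2; apply st_def; auto).
  assert (Enext : forall r, (r < 2)%nat -> off m (Ast s + 3 * m + 3 + r) = 2%nat).
  { intros r Hr. replace (Ast s + 3 * m + 3 + r)%nat with (2 + Kp m (S s) + r)%nat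
      by (unfold Ast; rewrite Kp_S; unfold LL; lia).
    rewrite off_at by (auto; unfold LL; lia). apply loff_fib. unfold JJ; lia. }
  assert (R3 : rho (Ast s + 3 * m + 3) = 2 - / (rho (Ast s + 3 * m + 2) * rho (Ast s + 3 * m + 1))).
  { rewrite rho_rec2; [|lia|].
    - req.
    - pose proof (Enext 0%nat ltac:(lia)). rewrite Nat.add_0_r in H. exact H. }
  assert (F0 : inF (rho (Ast s + 3 * m + 3))) by (rewrite R3; apply st_fib1; auto).
  assert (R4 : rho (Ast s + 3 * m + 4) = 2 - / (rho (Ast s + 3 * m + 3) * rho (Ast s + 3 * m + 2))).
  { rewrite rho_rec2; [|lia|].
    - req.
    - pose proof (Enext 1%nat ltac:(lia)). replace (Ast s + 3 * m + 3 + 1)%nat with (Ast s + 3 * m + 4)%nat in H by lia. exact H. }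
  assert (F1 : inF (rho (Ast s + 3 * m + 4))) by (rewrite R4; apply st_fib2; auto).
  exact (conj A0 (conj B0 (conj B1 (conj F0 F1)))).
Qed.


Lemma rho_lit : forall k a b, nn m (S k) = a -> nn m k = b -> rho k = IZR (Z.of_nat a) / IZR (Z.of_nat b).
Proof. intros k a b Ha Hb. unfold rho. rewrite Ha, Hb, !INR_IZR_INZ. reflexivity. Qed.

Definition Inv (s : nat) : Prop :=
  forall q, (s = 0%nat -> (3 <= q)%nat) -> (q < JJ s)%nat -> inF (rho (2 + Kp m s + q)).

Lemma Inv_all : forall s, Inv s.
Proof.
  induction s as [|s IH].
  - intros q Hq Hq2. specialize (Hq eq_refl). unfold JJ in Hq2. simpl Kp.
    assert (Hq3 : (q = 3 \/ q = 4 \/ q = 5)%nat) by lia. destruct Hq3 as [H3|[H3|H3]]; subst q; simpl.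
    + rewrite (rho_lit 5 32 19) by reflexivity. simpl. unfold inF, inI. lra.
    + rewrite (rho_lit 6 53 32) by reflexivity. simpl. unfold inF, inI. lra.
    + rewrite (rho_lit 7 87 53) by reflexivity. simpl. unfold inF, inI. lra.
  - assert (E1 : inF (rho (Ast s - 1))).
    { replace (Ast s - 1)%nat with (2 + Kp m s + (JJ s - 1))%nat by (unfold Ast, JJ; lia).
      apply IH; unfold JJ; lia. }
    assert (E2 : inF (rho (Ast s - 2))).
    { replace (Ast s - 2)%nat with (2 + Kp m s + (JJ s - 2))%nat by (unfold Ast, JJ; lia).
      apply IH; unfold JJ; lia. }
    destruct (window_box s E1 E2) as [_ [_ [_ [_ [F0 F1]]]]].
    assert (Z0 : (Ast s + 3 * m + 3 = 2 + Kp m (S s) + 0)%nat) by (unfold Ast; rewrite Kp_S; unfold LL; lia).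
    assert (Z1 : (Ast s + 3 * m + 4 = 2 + Kp m (S s) + 1)%nat) by (unfold Ast; rewrite Kp_S; unfold LL; lia).
    rewrite Z0 in F0. rewrite Z1 in F1.
    intros q _. induction q as [q IHq] using lt_wf_ind. intro Hq.
    destruct q as [|[|q]]; [exact F0|exact F1|].
    rewrite rho_rec2.
    + replace (2 + Kp m (S s) + S (S q) - 1)%nat with (2 + Kp m (S s) + S q)%nat by lia.
      replace (2 + Kp m (S s) + S (S q) - 2)%nat with (2 + Kp m (S s) + q)%nat by lia.
      apply st_fib; apply IHq; lia.
    + pose proof (Kp_ge m Hm (S s)). lia.
    + rewrite off_at by (auto; unfold LL; lia). apply loff_fib. exact Hq.
Qed.

Lemma Rabs_le_inv : forall a b, Rabs a <= b -> - b <= a <= b.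
Proof. intros a b H. unfold Rabs in H. destruct (Rcase_abs a); lra. Qed.

Definition phi : R := (1 + sqrt 5) / 2.

Lemma sqrt5_bounds : 2236/1000 < sqrt 5 < 22362/10000.
Proof.
  pose proof (sqrt_sqrt 5 ltac:(lra)) as H. pose proof (sqrt_pos 5).
  split; nra.
Qed.

Lemma phi_bounds : 1618/1000 < phi < 16181/10000.
Proof. unfold phi. pose proof sqrt5_bounds. lra. Qed.

Lemma phi_sq : phi * phi = phi + 1.
Proof.
  unfold phi. pose proof (sqrt_sqrt 5 ltac:(lra)) as H. nra.
Qed.

Lemma phi_fix : 2 - / (phi * phi) = phi.
Proof.
  rewrite phi_sq. pose proof phi_bounds.
  apply (Rmult_eq_reg_r (phi + 1)); [|lra].
  rewrite Rmult_minus_distr_r, Rinv_l by lra. pose proof phi_sq. nra.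
Qed.

Lemma contract : forall x y, inF x -> inF y ->
  Rabs (2 - / (x * y) - phi) <= 3/5 * Rmax (Rabs (x - phi)) (Rabs (y - phi)).
Proof.
  intros x y [Hx1 Hx2] [Hy1 Hy2].
  set (M := Rmax (Rabs (x - phi)) (Rabs (y - phi))).
  assert (Mx : Rabs (x - phi) <= M) by apply Rmax_l.
  assert (My : Rabs (y - phi) <= M) by apply Rmax_r.
  apply Rabs_le_inv in Mx. apply Rabs_le_inv in My.
  pose proof phi_bounds. pose proof phi_sq.
  assert (Hxy : 0 < x * y) by nra.
  replace (2 - / (x * y) - phi) with ((x * y - phi * phi) / (x * y * (phi * phi))).
  2:{ pose proof phi_fix as Hp. transitivity (/ (phi * phi) - / (x * y)); [field; split; nra|lra]. }
  assert (N1 : Rabs (x * y - phi * phi) <= (x + phi) * M).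
  { replace (x * y - phi * phi) with (x * (y - phi) + phi * (x - phi)) by ring.
    apply Rabs_le. split; nra. }
  rewrite Rabs_div by nra. rewrite (Rabs_right (x * y * (phi * phi))) by nra.
  apply (Rmult_le_reg_r (x * y * (phi * phi))); [nra|].
  unfold Rdiv. rewrite Rmult_assoc, Rinv_l, Rmult_1_r by nra.
  assert (0 <= M) by lra.
  assert ((x + phi) <= 3/5 * (x * y * (phi * phi))) by nra.
  nra.
Qed.

Lemma fib_conv : forall s, (1 <= s)%nat -> forall q, (q < JJ s)%nat ->
  Rabs (rho (2 + Kp m s + q) - phi) <= 3/20 * (4/5) ^ q.
Proof.
  intros s Hs. pose proof (Inv_all s) as I.
  assert (Hs0 : s <> 0%nat) by lia.
  induction q as [q IHq] using lt_wf_ind. intro Hq.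
  pose proof phi_bounds.
  destruct q as [|[|q]].
  - pose proof (I 0%nat ltac:(lia) Hq) as [H1 H2]. rewrite pow_O. apply Rabs_le. lra.
  - pose proof (I 1%nat ltac:(lia) Hq) as [H1 H2]. rewrite pow_1. apply Rabs_le. lra.
  - rewrite rho_rec2.
    + replace (2 + Kp m s + S (S q) - 1)%nat with (2 + Kp m s + S q)%nat by lia.
      replace (2 + Kp m s + S (S q) - 2)%nat with (2 + Kp m s + q)%nat by lia.
      eapply Rle_trans; [apply contract; apply I; lia|].
      pose proof (IHq (S q) ltac:(lia) ltac:(lia)) as A1.
      pose proof (IHq q ltac:(lia) ltac:(lia)) as A2.
      assert (P : 0 < (4/5) ^ q) by (apply pow_lt; lra).
      change ((4/5) ^ (S q)) with (4/5 * (4/5) ^ q) in A1.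
      change ((4/5) ^ (S (S q))) with (4/5 * (4/5 * (4/5) ^ q)).
      assert (Mx : Rmax (Rabs (rho (2 + Kp m s + S q) - phi)) (Rabs (rho (2 + Kp m s + q) - phi)) <= 3/20 * (4/5) ^ q).
      { apply Rmax_lub; nra. }
      nra.
    + pose proof (Kp_ge m Hm s). lia.
    + rewrite off_at by (auto; unfold LL; lia). apply loff_fib. exact Hq.
Qed.

Lemma lim_from_bound : forall (x : nat -> R) L (e : nat -> R),
  (forall s, Rabs (x s - L) <= e s) -> is_lim_seq e 0 -> is_lim_seq x L.
Proof.
  intros x L e H He.
  apply is_lim_seq_le_le with (u := fun s => L - e s) (w := fun s => L + e s).
  - intro s. specialize (H s). apply Rabs_le_inv in H. lra.
  - pose proof (is_lim_seq_minus' (fun _ => L) e L 0 (is_lim_seq_const L) He) as H1.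
    rewrite Rminus_0_r in H1. exact H1.
  - pose proof (is_lim_seq_plus' (fun _ => L) e L 0 (is_lim_seq_const L) He) as H1.
    rewrite Rplus_0_r in H1. exact H1.
Qed.

Lemma exit_conv : forall d, (1 <= d <= 2)%nat -> is_lim_seq (fun s => rho (Ast s - d)) phi.
Proof.
  intros d Hd. apply is_lim_seq_incr_1.
  apply (lim_from_bound _ _ (fun s => 3/20 * (4/5) ^ s)).
  - intro s. replace (Ast (S s) - d)%nat with (2 + Kp m (S s) + (JJ (S s) - d))%nat by (unfold Ast, JJ; lia).
    eapply Rle_trans; [apply fib_conv; unfold JJ; lia|].
    apply Rmult_le_compat_l; [lra|].
    replace (JJ (S s) - d)%nat with (s + (JJ (S s) - d - s))%nat by (unfold JJ; lia).
    rewrite pow_add.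
    assert (0 < (4/5) ^ s) by (apply pow_lt; lra).
    assert ((4/5) ^ (JJ (S s) - d - s) <= 1) by (pose proof (pow_incr (4/5) 1 (JJ (S s) - d - s) ltac:(lra)) as Hp; rewrite pow1 in Hp; exact Hp).
    nra.
  - assert (G := is_lim_seq_geom (4/5) ltac:(rewrite Rabs_right; lra)).
    apply (is_lim_seq_scal_l _ (3/20)) in G. simpl in G. rewrite Rmult_0_r in G. exact G.
Qed.

End Analysis.


Fixpoint useq (t : nat) : R :=
  match t with O => phi | S t' => (3 + 2 * useq t') / (2 + useq t') end.

Lemma sqrt3_bounds : 1732/1000 < sqrt 3 < 17321/10000.
Proof.
  pose proof (sqrt_sqrt 3 ltac:(lra)) as H. pose proof (sqrt_pos 3). split; nra.
Qed.

Lemma sqrt3_sq : sqrt 3 * sqrt 3 = 3.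
Proof. apply sqrt_sqrt. lra. Qed.

Lemma useq_bounds : forall t, phi <= useq t < sqrt 3.
Proof.
  pose proof phi_bounds. pose proof sqrt3_bounds. pose proof sqrt3_sq.
  induction t as [|t IH]; simpl; [lra|].
  destruct IH as [I1 I2].
  split.
  - apply (Rmult_le_reg_r (2 + useq t)); [lra|].
    unfold Rdiv. rewrite Rmult_assoc, Rinv_l, Rmult_1_r by lra.
    assert (useq t * useq t < 3) by nra. nra.
  - apply (Rmult_lt_reg_r (2 + useq t)); [lra|].
    unfold Rdiv. rewrite Rmult_assoc, Rinv_l, Rmult_1_r by lra. nra.
Qed.

Lemma useq_incr : forall t, useq t < useq (S t).
Proof.
  intro t. pose proof (useq_bounds t) as [I1 I2]. pose proof phi_bounds. pose proof sqrt3_sq.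
  pose proof sqrt3_bounds. simpl.
  apply (Rmult_lt_reg_r (2 + useq t)); [lra|].
  unfold Rdiv. rewrite Rmult_assoc, Rinv_l, Rmult_1_r by lra.
  assert (useq t * useq t < 3) by nra. nra.
Qed.

Lemma useq_gap : forall t, sqrt 3 - useq t <= (1/10) ^ t.
Proof.
  pose proof phi_bounds. pose proof sqrt3_bounds. pose proof sqrt3_sq.
  induction t as [|t IH]; simpl; [lra|].
  pose proof (useq_bounds t) as [I1 I2].
  assert (E : sqrt 3 - (3 + 2 * useq t) / (2 + useq t) = (2 - sqrt 3) * (sqrt 3 - useq t) / (2 + useq t)).
  { set (s3 := sqrt 3) in *. set (u := useq t) in *.
    apply Rminus_diag_uniq.
    replace (s3 - (3 + 2 * u) / (2 + u) - (2 - s3) * (s3 - u) / (2 + u)) with ((s3 * s3 - 3) / (2 + u))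
      by (field; lra).
    rewrite H1. unfold Rdiv. ring. }
  rewrite E.
  apply (Rmult_le_reg_r (2 + useq t)); [lra|].
  unfold Rdiv. rewrite Rmult_assoc, Rinv_l, Rmult_1_r by lra.
  assert (0 < (1/10) ^ t) by (apply pow_lt; lra).
  nra.
Qed.

Lemma useq_lim : is_lim_seq useq (sqrt 3).
Proof.
  apply (lim_from_bound _ _ (fun t => (1/10) ^ t)).
  - intro t. pose proof (useq_gap t). pose proof (useq_bounds t).
    rewrite Rabs_left1 by lra. lra.
  - apply is_lim_seq_geom. rewrite Rabs_right; lra.
Qed.

Lemma lim_inv : forall x (a : R), is_lim_seq x a -> a <> 0 -> is_lim_seq (fun s => / x s) (/ a).
Proof.
  intros x a H Ha. pose proof (is_lim_seq_inv x a H) as H'.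
  simpl in H'. apply H'. intro E. apply Ha. injection E. auto.
Qed.

Lemma lim_F1 : forall x (a : R), is_lim_seq x a -> a <> 0 -> is_lim_seq (fun s => 2 - / x s) (2 - / a).
Proof.
  intros x a H Ha. apply (is_lim_seq_minus' (fun _ => 2)); [apply is_lim_seq_const|].
  apply lim_inv; auto.
Qed.

Lemma lim_F2 : forall x y (a b : R), is_lim_seq x a -> is_lim_seq y b -> a * b <> 0 ->
  is_lim_seq (fun s => 2 - / (x s * y s)) (2 - / (a * b)).
Proof.
  intros x y a b Hx Hy Hab. apply (is_lim_seq_minus' (fun _ => 2)); [apply is_lim_seq_const|].
  apply (lim_inv (fun s => x s * y s)); auto. apply is_lim_seq_mult'; auto.
Qed.

Lemma lim_F3 : forall x y z (a b c : R), is_lim_seq x a -> is_lim_seq y b -> is_lim_seq z c -> a * b * c <> 0 ->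
  is_lim_seq (fun s => 2 - / (x s * y s * z s)) (2 - / (a * b * c)).
Proof.
  intros x y z a b c Hx Hy Hz Habc. apply (is_lim_seq_minus' (fun _ => 2)); [apply is_lim_seq_const|].
  apply (lim_inv (fun s => x s * y s * z s)); auto. apply is_lim_seq_mult'; auto. apply is_lim_seq_mult'; auto.
Qed.

Definition gg (u : R) : R := (2 + u) / (1 + u).

Lemma id1 : forall u, 0 < u -> 2 - / (1 + / u) = gg u.
Proof. intros u Hu. unfold gg. field. lra. Qed.
Lemma id2 : forall u, 0 < u -> 2 - / (gg u * (1 + / u) * u) = (3 + 2 * u) / (2 + u).
Proof. intros u Hu. unfold gg. field. lra. Qed.
Lemma id3 : forall u, 0 < u -> 2 - / ((3 + 2 * u) / (2 + u) * gg u) = 1 + / ((3 + 2 * u) / (2 + u)).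
Proof. intros u Hu. unfold gg. field. lra. Qed.
Lemma id4 : forall u, 0 < u -> 2 - / ((3 + 2 * u) / (2 + u) * gg u * (1 + / u)) = 3 / ((3 + 2 * u) / (2 + u)).
Proof. intros u Hu. unfold gg. field. lra. Qed.

Lemma phi_inv : 1 + / phi = phi.
Proof.
  pose proof phi_bounds. pose proof phi_sq.
  apply (Rmult_eq_reg_r phi); [|lra]. rewrite Rmult_plus_distr_r, Rinv_l by lra. lra.
Qed.

Ltac req := repeat first [ reflexivity | match goal with |- rho _ _ = rho _ _ => apply f_equal; lia end | f_equal ].

Section Win.
Variable m : nat.
Hypothesis Hm : (1 <= m)%nat.

Notation A := (Ast m).
Notation r := (rho m).

Lemma rec_a : forall s t, (t <= m)%nat -> r (A s + 3 * t) = 2 - / r (A s + 3 * t - 1).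
Proof.
  intros s t Ht. pose proof (Ast_ge m Hm s).
  apply rho_rec1; auto; [lia|]. rewrite off_win by lia.
  destruct (Nat.eq_dec t m) as [->|]; [apply loff_d1; auto|apply loff_p1; auto; lia].
Qed.

Lemma rec_b : forall s t, (t <= m)%nat ->
  r (A s + 3 * t + 1) = 2 - / (r (A s + 3 * t) * r (A s + 3 * t - 1) * r (A s + 3 * t - 2)).
Proof.
  intros s t Ht. pose proof (Ast_ge m Hm s).
  rewrite (rho_rec3 m Hm); [req|lia|].
  rewrite <- Nat.add_assoc. rewrite off_win by lia.
  replace (JJ s + (3 * t + 1))%nat with (JJ s + 3 * t + 1)%nat by lia.
  destruct (Nat.eq_dec t m) as [->|]; [apply loff_d2; auto|apply loff_p3; auto; lia].
Qed.

Lemma rec_c : forall s t, (t < m)%nat ->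
  r (A s + 3 * t + 2) = 2 - / (r (A s + 3 * t + 1) * r (A s + 3 * t)).
Proof.
  intros s t Ht. pose proof (Ast_ge m Hm s).
  rewrite (rho_rec2 m Hm); [req|lia|].
  rewrite <- Nat.add_assoc. rewrite off_win by lia.
  replace (JJ s + (3 * t + 2))%nat with (JJ s + 3 * t + 2)%nat by lia.
  apply loff_p2; auto.
Qed.

Lemma rec_d : forall s,
  r (A s + 3 * m + 2) = 2 - / (r (A s + 3 * m + 1) * r (A s + 3 * m) * r (A s + 3 * m - 1)).
Proof.
  intros s. pose proof (Ast_ge m Hm s).
  rewrite (rho_rec3 m Hm); [req|lia|].
  rewrite <- Nat.add_assoc. rewrite off_win by lia.
  replace (JJ s + (3 * m + 2))%nat with (JJ s + 3 * m + 2)%nat by lia.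
  apply loff_d3; auto.
Qed.

Definition Claim (t : nat) : Prop :=
  is_lim_seq (fun s => r (A s + 3 * t - 1)) (1 + / useq t) /\
  is_lim_seq (fun s => r (A s + 3 * t - 2)) (useq t).

Lemma upos : forall t, 0 < useq t.
Proof. intro t. pose proof (useq_bounds t). pose proof phi_bounds. lra. Qed.

Lemma LA : forall t, (t <= m)%nat -> Claim t -> is_lim_seq (fun s => r (A s + 3 * t)) (gg (useq t)).
Proof.
  intros t Ht [C1 C2]. pose proof (upos t).
  apply is_lim_seq_ext with (u := fun s => 2 - / r (A s + 3 * t - 1)).
  { intro s. symmetry. apply rec_a; auto. }
  rewrite <- id1 by auto. apply lim_F1; auto.
  assert (0 < / useq t) by (apply Rinv_0_lt_compat; auto). lra.
Qed.

Lemma gg_pos : forall u, 0 < u -> 0 < gg u.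
Proof. intros u Hu. unfold gg. apply Rdiv_lt_0_compat; lra. Qed.

Lemma LB : forall t, (t <= m)%nat -> Claim t -> is_lim_seq (fun s => r (A s + 3 * t + 1)) (useq (S t)).
Proof.
  intros t Ht C. pose proof (LA t Ht C) as La. destruct C as [C1 C2]. pose proof (upos t).
  apply is_lim_seq_ext with (u := fun s => 2 - / (r (A s + 3 * t) * r (A s + 3 * t - 1) * r (A s + 3 * t - 2))).
  { intro s. symmetry. apply rec_b; auto. }
  simpl useq. rewrite <- id2 by auto. apply lim_F3; auto.
  pose proof (gg_pos (useq t) H). assert (0 < / useq t) by (apply Rinv_0_lt_compat; auto).
  assert (0 < gg (useq t) * (1 + / useq t) * useq t).
  { apply Rmult_lt_0_compat; [apply Rmult_lt_0_compat|]; lra. }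
  lra.
Qed.

Lemma LC : forall t, (t < m)%nat -> Claim t -> is_lim_seq (fun s => r (A s + 3 * t + 2)) (1 + / useq (S t)).
Proof.
  intros t Ht C. pose proof (LA t ltac:(lia) C) as La. pose proof (LB t ltac:(lia) C) as Lb.
  pose proof (upos t). pose proof (upos (S t)) as Hu1.
  apply is_lim_seq_ext with (u := fun s => 2 - / (r (A s + 3 * t + 1) * r (A s + 3 * t))).
  { intro s. symmetry. apply rec_c; auto. }
  simpl useq. simpl useq in Hu1. rewrite <- id3 by auto. apply lim_F2; auto.
  pose proof (gg_pos (useq t) H).
  assert (0 < (3 + 2 * useq t) / (2 + useq t) * gg (useq t)) by (apply Rmult_lt_0_compat; lra).
  lra.
Qed.

Lemma Claim_all : forall t, (t <= m)%nat -> Claim t.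
Proof.
  induction t as [|t IH]; intro Ht.
  - split.
    + apply is_lim_seq_ext with (u := fun s => r (A s - 1)).
      { intro s. apply f_equal. lia. }
      change (useq 0) with phi. rewrite phi_inv. apply (exit_conv m Hm 1%nat); lia.
    + apply is_lim_seq_ext with (u := fun s => r (A s - 2)).
      { intro s. apply f_equal. lia. }
      change (useq 0) with phi. apply (exit_conv m Hm 2%nat); lia.
  - pose proof (IH ltac:(lia)) as C. split.
    + apply is_lim_seq_ext with (u := fun s => r (A s + 3 * t + 2)).
      { intro s. apply f_equal. lia. }
      apply LC; auto; lia.
    + apply is_lim_seq_ext with (u := fun s => r (A s + 3 * t + 1)).
      { intro s. apply f_equal. lia. }
      apply LB; auto; lia.
Qed.

Definition dlt : R := 3 / useq (S m).

Lemma LD : is_lim_seq (fun s => r (A s + 3 * m + 2)) dlt.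
Proof.
  pose proof (Claim_all m (le_n m)) as C.
  pose proof (LA m (le_n m) C) as La. pose proof (LB m (le_n m) C) as Lb.
  destruct C as [C1 C2]. pose proof (upos m). pose proof (upos (S m)) as Hu1.
  apply is_lim_seq_ext with (u := fun s => 2 - / (r (A s + 3 * m + 1) * r (A s + 3 * m) * r (A s + 3 * m - 1))).
  { intro s. symmetry. apply rec_d. }
  unfold dlt. simpl useq. simpl useq in Hu1. rewrite <- id4 by auto. apply lim_F3; auto.
  pose proof (gg_pos (useq m) H). assert (0 < / useq m) by (apply Rinv_0_lt_compat; auto).
  assert (0 < (3 + 2 * useq m) / (2 + useq m) * gg (useq m) * (1 + / useq m)).
  { apply Rmult_lt_0_compat; [apply Rmult_lt_0_compat|]; lra. }
  lra.
Qed.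

Lemma dlt_gt : sqrt 3 < dlt.
Proof.
  unfold dlt. pose proof (useq_bounds (S m)) as [U1 U2]. pose proof phi_bounds.
  pose proof sqrt3_sq. pose proof sqrt3_bounds.
  apply (Rmult_lt_reg_r (useq (S m))); [lra|].
  unfold Rdiv. rewrite Rmult_assoc, Rinv_l, Rmult_1_r by lra. nra.
Qed.

Lemma WinLim : forall q, (q <= 3 * m + 2)%nat ->
  exists L, L <= dlt /\ is_lim_seq (fun s => r (A s + q)) L.
Proof.
  intros q Hq. pose proof dlt_gt as Dg. pose proof sqrt3_bounds. pose proof phi_bounds.
  assert (Hd : exists t, (t <= m)%nat /\ (q = 3 * t \/ q = 3 * t + 1 \/ q = 3 * t + 2)%nat).
  { exists (q / 3)%nat. pose proof (Nat.div_mod q 3 ltac:(lia)) as D1.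
    pose proof (Nat.mod_upper_bound q 3 ltac:(lia)) as D2.
    set (a := (q / 3)%nat) in *. set (b := (q mod 3)%nat) in *. lia. }
  destruct Hd as [t [Ht [E|[E|E]]]]; subst q.
  - exists (gg (useq t)). split; [|apply LA; auto; apply Claim_all; auto].
    pose proof (useq_bounds t) as [U1 U2]. unfold gg.
    apply (Rmult_le_reg_r (1 + useq t)); [lra|].
    unfold Rdiv. rewrite Rmult_assoc, Rinv_l, Rmult_1_r by lra. nra.
  - exists (useq (S t)). split.
    2:{ apply is_lim_seq_ext with (u := fun s => r (A s + 3 * t + 1)).
        { intro s. apply f_equal. lia. }
        apply LB; auto. apply Claim_all; auto. }
    pose proof (useq_bounds (S t)). lra.
  - destruct (Nat.eq_dec t m) as [->|Hne].
    + exists dlt. split; [lra|].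
      apply is_lim_seq_ext with (u := fun s => r (A s + 3 * m + 2)).
      { intro s. apply f_equal. lia. }
      apply LD.
    + exists (1 + / useq (S t)). split.
      2:{ apply is_lim_seq_ext with (u := fun s => r (A s + 3 * t + 2)).
          { intro s. apply f_equal. lia. }
          apply LC; [lia|apply Claim_all; lia]. }
      pose proof (useq_bounds (S t)) as [U1 U2].
      assert (/ useq (S t) <= / phi) by (apply Rinv_le_contravar; lra).
      pose proof phi_inv. lra.
Qed.

End Win.


Lemma uniform_ev : forall (Q : nat -> nat -> Prop) (P : nat),
  (forall p, (p <= P)%nat -> exists S, forall s, (S <= s)%nat -> Q s p) ->
  exists S, forall s, (S <= s)%nat -> forall p, (p <= P)%nat -> Q s p.
Proof.
  intros Q P. induction P as [|P IH]; intro H.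
  - destruct (H 0%nat (le_n 0)) as [S HS]. exists S. intros s Hs p Hp.
    assert (p = 0%nat) by lia. subst. auto.
  - destruct IH as [S1 H1]; [intros p Hp; apply H; lia|].
    destruct (H (S P) (le_n _)) as [S2 H2].
    exists (Nat.max S1 S2). intros s Hs p Hp.
    destruct (Nat.eq_dec p (S P)) as [->|]; [apply H2; lia|apply H1; lia].
Qed.

Section Final.
Variable m : nat.
Hypothesis Hm : (1 <= m)%nat.

Lemma ev_lt : forall (x : nat -> R) (L : R) eps, is_lim_seq x L -> 0 < eps ->
  exists S, forall s, (S <= s)%nat -> L - eps < x s < L + eps.
Proof.
  intros x L eps H He. apply is_lim_seq_spec in H.
  destruct (H (mkposreal eps He)) as [S HS]. exists S. intros s Hs.
  specialize (HS s Hs). simpl in HS. apply Rabs_lt_between in HS. lra.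
Qed.

Theorem fam_limsup : is_LimSup_seq (fun i => INR (nn m (S i)) / INR (nn m i)) (Finite (dlt m)).
Proof.
  change (fun i => INR (nn m (S i)) / INR (nn m i)) with (rho m).
  simpl. intro eps. pose proof (cond_pos eps) as He. split.
  - intro N. destruct (ev_lt _ _ eps (LD m Hm) He) as [S0 HS].
    exists (Ast m (Nat.max S0 N) + 3 * m + 2)%nat. split.
    + pose proof (Ast_ge m Hm (Nat.max S0 N)). lia.
    + specialize (HS (Nat.max S0 N) ltac:(lia)). lra.
  - destruct (uniform_ev (fun s p => rho m (Ast m s + p) < dlt m + eps) (3 * m + 2)) as [S0 HS].
    { intros p Hp. destruct (WinLim m Hm p Hp) as [L [HL Hl]].
      destruct (ev_lt _ _ eps Hl He) as [S0 HS]. exists S0. intros s Hs.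
      specialize (HS s Hs). lra. }
    exists (2 + Kp m (S S0))%nat. intros i Hi.
    destruct (decomp m Hm i ltac:(lia)) as [s [q [Hq ->]]].
    assert (Hs : (S0 < s)%nat).
    { destruct (le_lt_dec s S0) as [Hle|Hlt]; [|exact Hlt].
      exfalso. pose proof (Kp_mono m Hm (S s) (S S0) ltac:(lia)). rewrite Kp_S in H. lia. }
    destruct (le_lt_dec (JJ s) q) as [Hq2|Hq2].
    + replace (2 + Kp m s + q)%nat with (Ast m s + (q - JJ s))%nat by (unfold Ast; lia).
      apply HS; [lia|]. unfold LL in Hq. lia.
    + pose proof (Inv_all m Hm s q ltac:(lia) Hq2) as [F1 F2].
      pose proof (dlt_gt m). pose proof sqrt3_bounds. lra.
Qed.

Theorem fam_D0 : D0 (dlt m).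
Proof.
  exists nat, (ww m), (nn m).
  pose proof (fam_abundant m Hm) as Ab. split; [exact Ab|].
  split; [exact (proj1 Ab)|]. apply fam_limsup.
Qed.

End Final.

Theorem proposition7p5 :
  exists u : nat -> R,
    (forall k : nat, D0 (u k)) /\
    (forall k : nat, u (S k) < u k) /\
    is_lim_seq u (sqrt 3).
Proof.
  exists (fun k => dlt (S k)). split; [|split].
  - intro k. apply fam_D0. lia.
  - intro k. unfold dlt.
    pose proof (useq_incr (S (S k))). pose proof (upos (S (S k))).
    apply Rmult_lt_compat_l; [lra|]. apply Rinv_lt_contravar; [nra|lra].
  - unfold dlt.
    assert (L : is_lim_seq (fun k => useq (S (S k))) (sqrt 3)).
    { apply (is_lim_seq_incr_1 (fun k => useq (S k))). apply (is_lim_seq_incr_1 useq). apply useq_lim. }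
    pose proof sqrt3_bounds. pose proof sqrt3_sq.
    apply lim_inv in L; [|lra].
    apply (is_lim_seq_scal_l _ 3) in L. simpl in L.
    assert (E : 3 * / sqrt 3 = sqrt 3).
    { apply (Rmult_eq_reg_r (sqrt 3)); [|lra]. rewrite Rmult_assoc, Rinv_l by lra. lra. }
    rewrite E in L. exact L.
Qed.
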